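(* Let $p=2\ell+1$ be an odd prime, let $K$ be an oriented knot with Alexander polynomial $\Delta_K(t)$, and let $\alpha\colon\pi_K\to D_p$ be an epimorphism. Then \[\Delta_K^{\varrho\circ\alpha}(t)\equiv\left(\frac{\Delta_K(t)}{1-t}\right)^{\ell+1}\cdot\left(\frac{\Delta_K(-t)}{1+t}\right)^{\ell}\pmod p,\] up to the indeterminacy $\pm t^k$.
   Context: $D_p=\langle x,y\mid x^2=y^p=1,\ xyx=y^{-1}\rangle$ acts on $\mathbb Z/p$ by $y\cdot n=n-1$, $x\cdot n=-n$; $\varrho\colon D_p\to\mathrm{GL}(p,\mathbb Z)$ is the associated permutation representation. $\pi_K=\pi_1(S^3\setminus\nu K)$. Twisted Alexander polynomial (Wada's invariant): let $\phi\colon\pi_K\to\mathbb Z$ send the oriented meridian to $1$; for $\alpha\colon\pi_K\to\mathrm{Aut}(V)$, $V$ a finitely generated free module over a UFD $R$ with quotient field $Q$, let $\alpha\otimes\phi$ act on $V\otimes_R R[t^{\pm1}]$ by $g\mapsto(v\otimes f\mapsto\alpha(g)v\otimes t^{\phi(g)}f)$. For a deficiency-one presentation $\langle g_1,\dots,g_{k+1}\mid r_1,\dots,r_k\rangle$ of $\pi_K$ with Fox matrix $M=(\partial r_i/\partial g_j)$ and $M_i$ obtained by deleting column $i$ with $\phi(g_i)\ne0$, set $\Delta_K^\alpha(t)=\det((\alpha\otimes\phi)(M_i))\det((\alpha\otimes\phi)(1-g_i))^{-1}\in Q(t)$. Congruence mod $p$ means the two rational functions agree after reducing coefficients mod $p$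 (equivalently, the twisted polynomial of the mod $p$ reduction $\varrho_p\circ\alpha$ over $\mathbb F_p$ equals the right-hand side in $\mathbb F_p(t)$ up to $\pm t^k$). *)

(* Defs.v *)
From HB Require Import structures.
From mathcomp Require Import all_boot all_order all_algebra.
From mathcomp Require Import fraction.

Set Implicit Arguments.
Unset Strict Implicit.
Unset Printing Implicit Defensive.

Import GRing.Theory.
Local Open Scope ring_scope.

(* Knot diagrams as combinatorial planar 4-valent maps.                *)
(* A diagram with n.+1 crossings has darts (c, i), c a crossing and    *)
(* i : 'I_4 the position of the half-edge at c in counterclockwise     *)
(* order.  Positions 0,2 form the under-strand, positions 1,3 the      *)
(* over-strand.  e is the edge involution pairing the two ends of each *)
(* edge of the diagram.                                                *)

Definition dart (n : nat) := ('I_n.+1 * 'I_4)%type.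

Definition rot n (d : dart n) : dart n := (d.1, ordS d.2).
Definition opp n (d : dart n) : dart n := rot (rot d).
Definition dart0 n : dart n := (ord0, ord0).

(* following the knot: arrive at d, leave through opp d, travel along  *)
(* the edge to e (opp d)                                               *)
Definition strand n (e : dart n -> dart n) (d : dart n) := e (opp d).

(* e is a fixed-point-free involution, the map is planar (Euler        *)
(* characteristic 2: V - E + F = (n+1) - 2(n+1) + F = 2, faces being   *)
(* the orbits of rot \o e), and the strands form a single closed curve *)
(* (two strand orbits = the two orientations of one component).       *)
Definition knot_diagram n (e : dart n -> dart n) : Prop :=
  [/\ forall d, e (e d) = d,
      forall d, e d != d,
      fcard (fun d => rot (e d)) (predT : pred (dart n)) = (n.+1 + 2)%N
    & fcard (strand e) (predT : pred (dart n)) = 2%N].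

(* orientation: the knot is oriented so that dart0 is an arriving dart *)
Definition arriving n (e : dart n -> dart n) (d : dart n) : bool :=
  fconnect (strand e) (dart0 n) d.

(* Words in the generators x_d (one meridian generator per dart: x_d is *)
(* the oriented meridian of the edge containing d); (d, true) = x_d^-1. *)
Definition word n := seq (dart n * bool).

(* Wirtinger-type relators, one per dart d:                            *)
(*  - d departing:           x_(e d) = x_d      (same edge)            *)
(*  - d arriving over-dart:  x_(opp d) = x_d    (over-strand)          *)
(*  - d arriving under-dart, o the arriving over-dart at the crossing: *)
(*       x_(opp d) = x_o^eps x_d x_o^-eps, eps the crossing sign       *)
(*    (positive iff rot o = d).                                        *)
Definition relator n (e : dart n -> dart n) (d : dart n) : word n :=
  if arriving e d then
    if odd d.2 then [:: (opp d, true); (d, false)]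
    else
      let o1 := rot (d.1, ord0) in
      let o := if arriving e o1 then o1 else opp o1 in
      if rot o == d then [:: (opp d, true); (o, false); (d, false); (o, true)]
      else [:: (opp d, true); (o, true); (d, false); (o, false)]
  else [:: (e d, true); (d, false)].

(* The dihedral group D_p, realised (faithfully) as the affine maps     *)
(* n |-> +-n + c of Z/p; (s, c) acts by n |-> (if s then -n else n)+c.  *)
(* Product = composition (g * h acts by h first).                      *)

Definition Dp (p : nat) := (bool * 'Z_p)%type.

Definition Dact p (g : Dp p) (m : 'Z_p) : 'Z_p := (if g.1 then - m else m) + g.2.
Definition Dmul p (g h : Dp p) : Dp p :=
  (g.1 (+) h.1, (if g.1 then - h.2 else h.2) + g.2).
Definition Dinv p (g : Dp p) : Dp p := (g.1, - (if g.1 then - g.2 else g.2)).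
Definition D1 p : Dp p := (false, 0).
(* the generators: x . n = -n,  y . n = n - 1 *)
Definition Dx p : Dp p := (true, 0).
Definition Dy p : Dp p := (false, -1).

Definition evalw n p (a : dart n -> Dp p) (w : word n) : Dp p :=
  foldr (fun x acc => Dmul (if x.2 then Dinv (a x.1) else a x.1) acc) (D1 p) w.

(* a homomorphism pi_K -> D_p given on the Wirtinger generators *)
Definition is_hom n p (e : dart n -> dart n) (a : dart n -> Dp p) : Prop :=
  forall d, evalw a (relator e d) = D1 p.

Definition is_epi n p (a : dart n -> Dp p) : Prop :=
  forall g : Dp p, exists w : word n, evalw a w = g.

Definition rho (R : nzRingType) p (g : Dp p) : 'M[R]_((Zp_trunc p).+2) :=
  \matrix_(i, j) ((i == Dact g j)%:R).

(* Fox calculus under a representation X (images of generators) and Xi *)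
(* (images of their inverses).                                         *)

Fixpoint fox (F : fieldType) q n (X Xi : dart n -> 'M[F]_q) (w : word n)
    (g : dart n) : 'M[F]_q :=
  match w with
  | [::] => 0
  | (h, b) :: w' =>
      (if b then - ((h == g)%:R *: Xi h) else (h == g)%:R%:M)
      + (if b then Xi h else X h) *m fox X Xi w' g
  end.

(* The Fox matrix (rows: relators, columns: generators, each entry a    *)
(* q x q block) with row r0 and column c0 deleted; the deletion is      *)
(* realised (up to sign) by replacing block (r0,c0) by the identity and *)
(* the rest of block-row r0 and block-column c0 by zero.                *)
Definition fox_minor (F : fieldType) q n (X Xi : dart n -> 'M[F]_q)
    (rel : dart n -> word n) (r0 c0 : dart n) : 'M[F]_#|{: dart n * 'I_q}| :=
  \matrix_(i, j)
    (let: (r, a) := enum_val i in let: (g, b) := enum_val j in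
     if r == r0 then (if g == c0 then (a == b)%:R else 0)
     else if g == c0 then 0 else fox X Xi (rel r) g a b).

Definition wada (F : fieldType) q n (X Xi : dart n -> 'M[F]_q)
    (rel : dart n -> word n) (r0 c0 : dart n) : F :=
  \det (fox_minor X Xi rel r0 c0) / \det (1%:M - X c0).

Definition Fpt (p : nat) := {fraction {poly 'F_p}}.
Definition tt (p : nat) : Fpt p := @FracField.tofrac _ ('X : {poly 'F_p}).

Definition twisted_alex n p (e : dart n -> dart n) (a : dart n -> Dp p) : Fpt p :=
  wada (fun d => tt p *: rho (Fpt p) (a d))
       (fun d => (tt p)^-1 *: rho (Fpt p) (Dinv (a d)))
       (relator e) (dart0 n) (dart0 n).

(* Alexander polynomial Delta_K (Fox: determinant of the abelianised    *)
(* Fox matrix minor), reduced mod p, evaluated at tau                   *)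
Definition alex n p (e : dart n -> dart n) (tau : Fpt p) : Fpt p :=
  \det (fox_minor (fun _ => tau%:M : 'M[Fpt p]_1) (fun _ => tau^-1%:M)
          (relator e) (dart0 n) (dart0 n)).

(* Main.v *)
Require Import Defs.
From HB Require Import structures.
From mathcomp Require Import all_boot all_order all_algebra.
From mathcomp Require Import fraction ring.
Import GRing.Theory.
Local Open Scope ring_scope.
Set Warnings "-notation-overridden,-ambiguous-paths".
Set Implicit Arguments. Unset Strict Implicit. Unset Printing Implicit Defensive.
Section Gen.
Variable R : comNzRingType.

Lemma det_reindex m n (e : m = n) (f : 'I_m -> 'I_n) (finj : injective f)
   (B : 'M[R]_n) : \det (\matrix_(i,j) B (f i) (f j)) = \det B.
Proof.
subst m. set s := perm.perm finj.
have -> : \matrix_(i,j) B (f i) (f j) = row_perm s (col_perm s B).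
  by apply/matrixP=> i j; rewrite !mxE /s !perm.permE.
rewrite row_permE col_permE !det_mulmx !det_perm perm.odd_permV.
by rewrite mulrCA -signr_addb addbb expr0 mulr1.
Qed.

Lemma det_castmx n n' (e : n = n') (A : 'M[R]_n) : \det (castmx (e,e) A) = \det A.
Proof. by case: n' / e; rewrite castmx_id. Qed.

Lemma det_layers D q (F : nat -> nat -> R) :
 (forall i j, (i < q*D)%N -> (j < q*D)%N -> (j %/ D < i %/ D)%N -> F i j = 0) ->
 \det (\matrix_(i, j < q*D) F i j) =
   \prod_(a < q) \det (\matrix_(i, j < D) F (a*D+i)%N (a*D+j)%N).
Proof.
elim: q F => [|q IH] F HF.
  by rewrite big_ord0 det_mx00.
have e : (q.+1 * D = D + q * D)%N by rewrite mulSn.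
rewrite -(det_castmx e).
set M' := \matrix_(i, j < D + q*D) F i j.
have -> : castmx (e,e) (\matrix_(i, j < q.+1*D) F i j) = M'.
  by apply/matrixP=> i j; rewrite castmxE !mxE.
rewrite -(submxK M').
have -> : dlsubmx M' = 0.
  apply/matrixP=> i j; rewrite !mxE /=; apply: HF.
  - by rewrite mulSn ltn_add2l.
  - by rewrite mulSn (leq_trans (ltn_ord j)) ?leq_addr.
  - have Dp : (0 < D)%N by case: (D) j => [[]|].
    rewrite divn_small // addnC divnDr ?dvdnn // divnn Dp addn1 //.
rewrite det_ublock big_ord_recl.
congr (_ * _).
  by congr (\det _); apply/matrixP=> i j; rewrite !mxE.
have -> : drsubmx M' = \matrix_(i, j < q*D) (fun i j => F (D + i)%N (D + j)%N) i j.
  by apply/matrixP=> i j; rewrite !mxE.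
rewrite (IH (fun i j => F (D + i)%N (D + j)%N)).
  by apply: eq_bigr => a _; congr (\det _); apply/matrixP=> i j;
     rewrite !mxE /= mulSn !addnA.
move=> i j Hi Hj Hij; apply: HF.
- by rewrite mulSn ltn_add2l.
- by rewrite mulSn ltn_add2l.
- have Dp : (0 < D)%N by case: (D) Hi; rewrite ?muln0.
  by rewrite !(addnC D) !divnDr ?dvdnn // divnn Dp !addn1 ltnS.
Qed.
End Gen.
Section Fox.
Variable F : fieldType.
Variables (q n : nat).
Implicit Types (X Xi : dart n -> 'M[F]_q).

Lemma fox_conj X Xi (P : 'M[F]_q) (w : word n) g : P \in unitmx ->
  fox (fun d => invmx P *m X d *m P) (fun d => invmx P *m Xi d *m P) w g
  = invmx P *m fox X Xi w g *m P.
Proof.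
move=> Pu; elim: w => [|[h b] w IH] /=; first by rewrite mulmx0 mul0mx.
rewrite IH mulmxDr mulmxDl; case: b; congr (_ + _).
- by rewrite mulmxN mulNmx -scalemxAr -scalemxAl.
- by rewrite !mulmxA -(mulmxA _ P) mulmxV // mulmx1.
- by rewrite scalar_mxC -mulmxA mulVmx // mulmx1.
- by rewrite !mulmxA -(mulmxA _ P) mulmxV // mulmx1.
Qed.

Definition utri (M : 'M[F]_q) := forall i j : 'I_q, (j < i)%N -> M i j = 0.

Lemma utri_mul A B : utri A -> utri B -> utri (A *m B) /\
   forall a, (A *m B) a a = A a a * B a a.
Proof.
move=> HA HB; split.
  move=> i j lt_ji; rewrite mxE big1 // => k _.
  case: (ltnP k i) => [lt_ki|le_ik]; first by rewrite HA ?mul0r.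
  by rewrite HB ?mulr0 // (leq_trans lt_ji).
move=> a; rewrite mxE (bigD1 a) //= big1 ?addr0 // => k nka.
case: (ltnP k a) => [lt_ka|le_ak]; first by rewrite HA ?mul0r.
by rewrite HB ?mulr0 // ltn_neqAle le_ak andbT eq_sym.
Qed.

Lemma fox_utri X Xi (w : word n) g :
  (forall d, utri (X d)) -> (forall d, utri (Xi d)) ->
  utri (fox X Xi w g) /\ forall a,
   fox X Xi w g a a =
   fox (fun d => (X d a a)%:M : 'M[F]_1) (fun d => (Xi d a a)%:M) w g 0 0.
Proof.
move=> HX HXi; elim: w => [|[h b] w [IHt IHd]] /=.
  by split; [move=> i j _; rewrite mxE | move=> a; rewrite !mxE].
have Hh : utri (if b then Xi h else X h) by case: b.
have [Ht Hd] := utri_mul Hh IHt.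
have Hd1 : utri (if b then - ((h == g)%:R *: Xi h) else (h == g)%:R%:M).
  move=> i j lt_ji; case: b {Hh Hd Ht}; rewrite !mxE.
    by rewrite HXi // mulr0 oppr0.
  by rewrite (_ : (i == j) = false) ?mulr0n // -val_eqE /= gtn_eqF.
split.
  by move=> i j lt_ji; rewrite mxE Ht // Hd1 // addr0.
move=> a; rewrite mxE Hd IHd [in RHS]mxE; congr (_ + _).
  by destruct b; rewrite !mxE ?eqxx ?mulr1n.
by rewrite mxE big_ord1; destruct b; rewrite mxE.
Qed.

End Fox.

Lemma eq_fox (F : fieldType) q n (X1 Xi1 X2 Xi2 : dart n -> 'M[F]_q) (w : word n) g :
  (forall d, X1 d = X2 d) -> (forall d, Xi1 d = Xi2 d) ->
  fox X1 Xi1 w g = fox X2 Xi2 w g.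
Proof. by move=> H1 H2; elim: w => [|[h b] w IH] //=; rewrite IH H1 H2. Qed.
Section Tri.
Variable p : nat.
Hypothesis hp : prime p.
Local Notation F := (Fpt p).
Local Notation q := (Zp_trunc p).+2.

Lemma qE : q = p. Proof. by rewrite Zp_cast // prime_gt1. Qed.

Lemma charF : p \in [pchar F].
Proof. apply: (rmorph_pchar (@FracField.tofrac _)). apply: (rmorph_pchar polyC). exact: pchar_Fp. Qed.

Lemma natF0 m : ((m%:R : F) == 0) = (p %| m)%N.
Proof. by rewrite (dvdn_pcharf charF). Qed.

Lemma natF_mod m : (((m %% q)%N)%:R : F) = m%:R.
Proof.
rewrite {2}(divn_eq m q) natrD natrM qE.
by move/eqP: (natF0 p); rewrite dvdnn => ->; rewrite mulr0 add0r.
Qed.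

Definition iota (x : 'Z_p) : F := (val x)%:R.

Lemma iotaD x y : iota (x + y) = iota x + iota y.
Proof. by rewrite /iota -natrD -[RHS]natF_mod. Qed.

Lemma iota0 : iota 0 = 0. Proof. by []. Qed.

Lemma iotaN x : iota (- x) = - iota x.
Proof. by apply/eqP; rewrite -subr_eq0 opprK -iotaD addNr. Qed.

Lemma iotaB x y : iota (x - y) = iota x - iota y.
Proof. by rewrite iotaD iotaN. Qed.

Lemma iota_inj (x y : 'Z_p) : iota x = iota y -> x = y.
Proof.
move=> H; apply/val_inj => /=.
have hx : (val x < p)%N := leq_trans (ltn_ord x) (eq_leq qE).
have hy : (val y < p)%N := leq_trans (ltn_ord y) (eq_leq qE).
wlog le_xy : x y H hx hy / (val x <= val y)%N.
  move=> W; case: (leqP (val x) (val y)) => [|/ltnW] h; first exact: W.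
  by apply/esym/W.
have : ((val y - val x)%N%:R : F) == 0 by rewrite natrB // -/(iota y) -H subrr.
rewrite natF0 => hdiv; case: (posnP (val y - val x)) => [|hpos].
  by move/eqP; rewrite subn_eq0 => h; apply/eqP; rewrite eqn_leq le_xy h.
have h' := dvdn_leq hpos hdiv.
by have := leq_ltn_trans h' (leq_ltn_trans (leq_subr _ _) hy); rewrite ltnn.
Qed.

Definition Pm : 'M[F]_q := \matrix_(i, k) (iota i) ^+ k.

Definition sg (g : Dp p) : F := if g.1 then -1 else 1.
Definition dd (g : Dp p) : F := - (sg g * iota g.2).

Definition Tm (g : Dp p) : 'M[F]_q :=
  \matrix_(j, k) ((('C(k, j))%:R : F) * sg g ^+ j * dd g ^+ (k - j)).

Lemma Dact_eq (g : Dp p) (i j : 'Z_p) :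
  (i == Dact g j) = (j == if g.1 then g.2 - i else i - g.2).
Proof.
case: g => [[] c]; rewrite /Dact /=; apply/eqP/eqP => ->; ring.
Qed.

Lemma rhoP (g : Dp p) : rho F g *m Pm = Pm *m Tm g.
Proof.
apply/matrixP => i k; rewrite !mxE.
set j0 := if g.1 then g.2 - i else i - g.2.
rewrite (bigD1 j0) //= big1 => [|j nj]; last by rewrite !mxE Dact_eq (negbTE nj) mul0r.
rewrite !mxE Dact_eq eqxx mul1r addr0.
have -> : iota j0 = dd g + sg g * iota i.
  by rewrite /j0 /dd /sg; clear j0; case: g => [[] c] /=; rewrite iotaB; ring.
rewrite exprDn (big_ord_widen q (fun j => dd g ^+ (k - j) * (sg g * iota i) ^+ j *+ 'C(k, j)) (ltn_ord k)) big_mkcond /=.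
apply: eq_bigr => j _; rewrite !mxE.
case: ltnP => hj.
  by rewrite exprMn -mulrnAr mulrnAl -mulr_natl; ring.
by rewrite bin_small // mul0r mul0r mulr0.
Qed.

Lemma Pm_unit : Pm \in unitmx.
Proof.
rewrite unitmxE unitfE -det_tr.
have -> : Pm^T = Vandermonde q (\row_i iota i).
  by apply/matrixP => k i; rewrite !mxE.
rewrite det_Vandermonde; apply/prodf_neq0 => i _; apply/prodf_neq0 => j lt_ij.
rewrite !mxE subr_eq0; apply/negP => /eqP /iota_inj /eqP.
by rewrite -val_eqE /= gtn_eqF.
Qed.

Lemma conj_rho (g : Dp p) : invmx Pm *m rho F g *m Pm = Tm g.
Proof. by rewrite -mulmxA rhoP mulmxA mulVmx ?Pm_unit // mul1mx. Qed.

Lemma Tm_utri g : utri (Tm g).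
Proof. by move=> j k lt; rewrite mxE bin_small // !mul0r. Qed.

Lemma Tm_diag g a : Tm g a a = sg g ^+ a.
Proof. by rewrite mxE binn subnn expr0 mulr1 mul1r. Qed.
End Tri.
Section MxJ.
Variable R : comNzRingType.
Variable J : finType.

Definition mxJ (f : J -> J -> R) : 'M[R]_#|J| :=
  \matrix_(i, j) f (enum_val i) (enum_val j).

Lemma sum_enum (G : J -> R) : \sum_(j < #|J|) G (enum_val j) = \sum_y G y.
Proof. by rewrite [RHS](reindex (@enum_val J xpredT)) //; apply: onW_bij; apply: enum_val_bij. Qed.

Lemma mxJ_mul f g : mxJ f *m mxJ g = mxJ (fun x z => \sum_y f x y * g y z).
Proof.
apply/matrixP => i k; rewrite !mxE.
rewrite -(sum_enum (fun y => f (enum_val i) y * g y (enum_val k))).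
by apply: eq_bigr => j _; rewrite !mxE.
Qed.

Lemma eq_mxJ f g : (forall x y, f x y = g x y) -> mxJ f = mxJ g.
Proof. by move=> H; apply/matrixP => i j; rewrite !mxE H. Qed.
End MxJ.

Section BlockMul.
Variable R : comNzRingType.
Variables (I : finType) (q : nat).
Local Notation J := (I * 'I_q)%type.

Lemma sum_pair (G : J -> R) : \sum_(y : J) G y = \sum_(r : I) \sum_(a < q) G (r, a).
Proof. by rewrite pair_big; apply: eq_bigr => -[]. Qed.

Lemma bdiag_mull (A : 'M[R]_q) (f : J -> J -> R) :
  mxJ (fun x y : J => (x.1 == y.1)%:R * A x.2 y.2) *m mxJ f
  = mxJ (fun x z => \sum_(a < q) A x.2 a * f (x.1, a) z).
Proof.
rewrite mxJ_mul; apply: eq_mxJ => x z.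
rewrite sum_pair /=.
rewrite (bigD1 x.1) //= [X in _ + X]big1 ?addr0 => [|r nr]; last first.
  by apply: big1 => a _; rewrite eq_sym (negbTE nr) !mul0r.
by apply: eq_bigr => a _; rewrite eqxx mul1r.
Qed.

Lemma bdiag_mulr (B : 'M[R]_q) (f : J -> J -> R) :
  mxJ f *m mxJ (fun y z : J => (y.1 == z.1)%:R * B y.2 z.2)
  = mxJ (fun x z => \sum_(b < q) f x (z.1, b) * B b z.2).
Proof.
rewrite mxJ_mul; apply: eq_mxJ => x z.
rewrite sum_pair /=.
rewrite (bigD1 z.1) //= [X in _ + X]big1 ?addr0 => [|r nr]; last first.
  by apply: big1 => b _; rewrite (negbTE nr) !mul0r mulr0.
by apply: eq_bigr => b _; rewrite eqxx mul1r.
Qed.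
End BlockMul.
Section MinorConj.
Variables (F : fieldType) (q n : nat).
Implicit Types (X Xi : dart n -> 'M[F]_q).

Definition mf X Xi (rel : dart n -> word n) (r0 c0 : dart n)
   (x y : (dart n * 'I_q)%type) : F :=
  if x.1 == r0 then (if y.1 == c0 then (x.2 == y.2)%:R else 0)
  else if y.1 == c0 then 0 else fox X Xi (rel x.1) y.1 x.2 y.2.

Lemma fox_minorE X Xi rel r0 c0 :
  fox_minor X Xi rel r0 c0 = mxJ (mf X Xi rel r0 c0).
Proof.
by apply/matrixP => i j; rewrite !mxE; case: (enum_val i) => r a; case: (enum_val j).
Qed.

Definition Qm (M : 'M[F]_q) :=
  mxJ (fun x y : (dart n * 'I_q)%type => (x.1 == y.1)%:R * M x.2 y.2).

Lemma minor_conj X Xi rel r0 c0 (P : 'M[F]_q) : P \in unitmx ->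
  fox_minor (fun d => invmx P *m X d *m P) (fun d => invmx P *m Xi d *m P) rel r0 c0
  = Qm (invmx P) *m fox_minor X Xi rel r0 c0 *m Qm P.
Proof.
move=> Pu; rewrite !fox_minorE /Qm bdiag_mull bdiag_mulr.
apply: eq_mxJ => -[r a] [g b]; rewrite /mf /=.
case: (r == r0); case: (g == c0) => /=.
- rewrite (eq_bigr (fun b' => invmx P a b' * P b' b)); last first.
    move=> b' _; congr (_ * _).
    rewrite (bigD1 b') //= eqxx mulr1 big1 ?addr0 // => a' /negbTE ->.
    by rewrite mulr0.
  by have := congr1 (fun M : 'M[F]_q => M a b) (mulVmx Pu); rewrite !mxE => <-.
- by rewrite big1 // => b' _; rewrite big1 ?mul0r // => a' _; rewrite mulr0.
- by rewrite big1 // => b' _; rewrite big1 ?mul0r // => a' _; rewrite mulr0.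
- by rewrite fox_conj // !mxE; apply: eq_bigr => b' _; rewrite !mxE.
Qed.

Lemma Qm_det (P : 'M[F]_q) : P \in unitmx -> \det (Qm (invmx P)) * \det (Qm P) = 1.
Proof.
move=> Pu; rewrite -det_mulmx /Qm bdiag_mull.
transitivity (\det (1%:M : 'M[F]_#|{: dart n * 'I_q}|)); last exact: det1.
congr (\det _).
  apply/matrixP => i j; rewrite !mxE /=.
  have := congr1 (fun M : 'M[F]_q => M (enum_val i).2 (enum_val j).2) (mulVmx Pu).
  rewrite !mxE => E.
  case: eqP => [E1|N1].
    rewrite (_ : (i == j) = ((enum_val i).2 == (enum_val j).2)).
      by rewrite -E; apply: eq_bigr => a _; rewrite mul1r.
    apply/eqP/eqP => [->//|E2]; apply: enum_val_inj.
    by case: (enum_val i) (enum_val j) E1 E2 => [? ?] [? ?] /= -> ->.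
  rewrite (_ : (i == j) = false); last by apply/negbTE/eqP => E2; apply: N1; rewrite E2.
  by rewrite big1 // => a _; rewrite mul0r mulr0.
Qed.
End MinorConj.
Section Layers.
Variable R : comNzRingType.
Variables (I : finType) (x0 : I) (q' : nat).
Local Notation q := q'.+1.
Local Notation D := #|I|.

Lemma Dpos : (0 < D)%N. Proof. by apply/card_gt0P; exists x0. Qed.

Definition pr (k : nat) : (I * 'I_q)%type :=
  (enum_val (Ordinal (div.ltn_pmod k Dpos)), insubd ord0 (k %/ D)%N).

Lemma pr2 k : (k < q * D)%N -> val (pr k).2 = (k %/ D)%N.
Proof. by move=> hk; rewrite val_insubd ltn_divLR ?Dpos // hk. Qed.

Lemma det_mxJ_layers (f : (I * 'I_q)%type -> (I * 'I_q)%type -> R) :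
  (forall r (a : 'I_q) g (b : 'I_q), (b < a)%N -> f (r, a) (g, b) = 0) ->
  \det (mxJ f) = \prod_(a < q) \det (mxJ (fun x y : (I * 'I_1)%type => f (x.1, a) (y.1, a))).
Proof.
move=> Hf.
have e : (q * D = #|{: I * 'I_q}|)%N by rewrite card_prod card_ord mulnC.
pose h (k : 'I_(q * D)) : 'I_#|{: I * 'I_q}| := enum_rank (pr k).
have hinj : injective h.
  move=> i j /enum_rank_inj [] /enum_val_inj [] Emod /(congr1 val).
  rewrite !pr2 // => Ediv; apply/val_inj => /=.
  by rewrite (divn_eq i D) (divn_eq j D) Emod Ediv.
rewrite -(det_reindex e hinj).
rewrite (_ : \matrix_(i, j) mxJ f (h i) (h j) = \matrix_(i, j < q * D) f (pr i) (pr j)); last first.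
  by apply/matrixP => i j; rewrite !mxE /h !enum_rankK.
rewrite (det_layers (F := fun i j => f (pr i) (pr j))); last first.
  move=> i j hi hj hij; rewrite /pr; apply: Hf.
  by rewrite (pr2 hi) (pr2 hj).
apply: eq_bigr => a _.
have e1 : (D = #|{: I * 'I_1}|)%N by rewrite card_prod card_ord muln1.
pose h1 (k : 'I_D) : 'I_#|{: I * 'I_1}| := enum_rank (enum_val k, ord0 : 'I_1).
have h1inj : injective h1.
  by move=> i j /enum_rank_inj [] /enum_val_inj.
rewrite -(det_reindex e1 h1inj); congr (\det _); apply/matrixP => i j.
rewrite !mxE /h1 !enum_rankK /=.
have prE : forall k : 'I_D, pr (a * D + k) = (enum_val k, a).
  move=> k; rewrite /pr; congr (_, _).
    by congr enum_val; apply/val_inj => /=; rewrite modnMDl modn_small.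
  apply/val_inj; rewrite val_insubd divnMDl ?Dpos // divn_small // addn0.
  by rewrite ltn_ord.
by rewrite !prE.
Qed.
End Layers.
Section Topo.
Variable n : nat.
Variable e : dart n -> dart n.
Hypothesis hK : knot_diagram e.
Local Notation s := (strand e).

Lemma doppK (d : dart n) : Defs.opp (Defs.opp d) = d.
Proof. by case: d => c [[|[|[|[|k]]]] hk] //; apply/pair_equal_spec; split=> //; apply/val_inj. Qed.

Lemma dopp_neq (d : dart n) : Defs.opp d != d.
Proof. by case: d => c [[|[|[|[|k]]]] hk] //; rewrite xpair_eqE eqxx. Qed.

Lemma eK d : e (e d) = d. Proof. by case: hK. Qed.
Lemma e_neq d : e d != d. Proof. by case: hK. Qed.

Lemma s_inj : injective s.
Proof.
move=> x y; rewrite /strand => /(congr1 e); rewrite !eK => /(congr1 (@Defs.opp n)).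
by rewrite !doppK.
Qed.

Lemma es d : e (s d) = Defs.opp d. Proof. by rewrite /strand eK. Qed.

Lemma s_opp_s y : s (Defs.opp (s y)) = Defs.opp y.
Proof. by rewrite /strand doppK es. Qed.

Lemma no_opp_iter y c : Defs.opp y <> iter c s y.
Proof.
move=> E.
have H : forall i, (i <= c)%N -> Defs.opp (iter i s y) = iter (c - i) s y.
  elim=> [|i IH] hi; first by rewrite subn0.
  have hci : (c - i = (c - i.+1).+1)%N by rewrite subnSK.
  apply: s_inj; rewrite iterS s_opp_s IH ?(ltnW hi) // hci.
  by rewrite iterS.
case: (boolP (odd c)) => oc.
  have hi : (c./2 <= c)%N by rewrite leq_half_double -addnn leqW // leq_addr.
  have := H _ hi.
  have -> : (c - c./2 = (c./2).+1)%N.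
    by rewrite -{1}(odd_double_half c) oc -addnn add1n subSn ?leq_addr // addnK.
  rewrite iterS => E2.
  by have := e_neq (Defs.opp (iter c./2 s y)); rewrite {1}E2 es eqxx.
have hi : (c./2 <= c)%N by rewrite leq_half_double -addnn leqW // leq_addr.
have := H _ hi.
have -> : (c - c./2 = c./2)%N.
  by rewrite -{1}(odd_double_half c) (negbTE oc) add0n -addnn addnK.
by move=> E2; have := dopp_neq (iter c./2 s y); rewrite E2 eqxx.
Qed.

Lemma no_opp_conn y : fconnect s y (Defs.opp y) = false.
Proof.
apply/negbTE/negP => /iter_findex E.
exact: (no_opp_iter (esym E)).
Qed.

Lemma csym : connect_sym (frel s).
Proof. by move=> x y; apply: fconnect_sym; apply: s_inj. Qed.

Lemma arr_opp d : arriving e d -> arriving e (Defs.opp d) = false.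
Proof.
rewrite /arriving => h1; apply/negbTE/negP => h2.
have : fconnect s d (Defs.opp d).
  by apply: connect_trans h2; rewrite csym.
by rewrite no_opp_conn.
Qed.

Lemma three_orbits x y z :
  ~~ fconnect s x y -> ~~ fconnect s x z -> ~~ fconnect s y z ->
  (3 <= fcard s (predT : pred (dart n)))%N.
Proof.
move=> nxy nxz nyz.
set rs := [:: froot s x; froot s y; froot s z].
have U : uniq rs.
  by rewrite /rs /= !inE !(root_connect csym) (negbTE nxy) (negbTE nxz) (negbTE nyz).
suff : (#|rs| <= fcard s (predT : pred (dart n)))%N by rewrite (card_uniqP U).
apply: subset_leq_card; apply/subsetP => r.
rewrite !inE /= => /or3P [] /eqP ->; rewrite /roots /= root_root ?eqxx //; exact: csym.
Qed.

Lemma nonarr_opp d : arriving e d = false -> arriving e (Defs.opp d).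
Proof.
move=> h1; apply/negPn/negP => h2.
have := three_orbits (x := dart0 n) (y := d) (z := Defs.opp d).
rewrite /arriving in h1 h2; rewrite h1 (negbTE h2) no_opp_conn.
by case: hK => _ _ _ -> /(_ isT isT isT).
Qed.
End Topo.
Section Signs.
Variables (p n : nat) (e : dart n -> dart n) (alpha : dart n -> Dp p).
Hypothesis hK : knot_diagram e.
Hypothesis hhom : is_hom e alpha.
Hypothesis hepi : is_epi alpha.
Local Notation s := (strand e).
Local Notation sig d := (alpha d).1.

Lemma evalw_sign (w : word n) :
  (evalw alpha w).1 = foldr (fun x b => (alpha x.1).1 (+) b) false w.
Proof. by elim: w => [|[d b] w IH] //=; rewrite -IH; case: b. Qed.

Lemma rel_sign d : (foldr (fun x b => (alpha x.1).1 (+) b) false (relator e d)) = false.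
Proof. by rewrite -evalw_sign hhom. Qed.

Lemma rel_dep d : arriving e d = false -> sig (e d) = sig d.
Proof.
move=> h; have := rel_sign d; rewrite /relator h /=.
by case: (sig (e d)); case: (sig d).
Qed.

Lemma rel_arr d : arriving e d -> sig (Defs.opp d) = sig d.
Proof.
move=> h; have := rel_sign d; rewrite /relator h.
case: ifP => _ /=; first by case: (sig (Defs.opp d)); case: (sig d).
case: ifP => _ /=.
  by case: (sig (Defs.opp d)); case: (sig d); case: (sig _).
by case: (sig (Defs.opp d)); case: (sig d); case: (sig _).
Qed.

Lemma sig_const d : sig d = sig (dart0 n).
Proof.
have HA : forall c, sig (iter c s (dart0 n)) = sig (dart0 n).
  elim=> [//|c IH]; rewrite iterS.
  have hx : arriving e (iter c s (dart0 n)) by apply: fconnect_iter.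
  rewrite {1}/strand rel_dep ?arr_opp // rel_arr //.
case: (boolP (arriving e d)) => h.
  by rewrite -(iter_findex h) HA.
have h' := nonarr_opp hK (negbTE h).
rewrite -{1}(doppK d) rel_arr //.
by rewrite -(iter_findex h') HA.
Qed.

Lemma all_refl d : sig d = true.
Proof.
rewrite sig_const; apply/negP => /negP /negbTE H.
have [w Hw] := hepi (Dx p).
have : (evalw alpha w).1 = false.
  rewrite evalw_sign; elim: w {Hw} => [//|[x b] w IH] /=.
  by rewrite IH sig_const H.
by rewrite Hw.
Qed.
End Signs.
Lemma utri_scale (F : fieldType) q (c : F) (M : 'M[F]_q) : @utri F q M -> @utri F q (c *: M).
Proof. by move=> H i j lt; rewrite mxE H // mulr0. Qed.

Lemma prod_parity (R : comNzRingType) (h : nat -> R) m :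
  (forall a, h a = h (odd a)) ->
  \prod_(a < (m.*2).+1) h a = h 0%N ^+ m.+1 * h 1%N ^+ m.
Proof.
move=> Hh; elim: m => [|m IH]; first by rewrite big_ord1 expr1 expr0 mulr1.
rewrite doubleS big_ord_recr big_ord_recr /= IH (Hh m.*2.+1) (Hh m.*2.+2) /= odd_double /=.
by rewrite !exprS; ring.
Qed.

Section Main.
Variables (p n : nat) (e : dart n -> dart n) (alpha : dart n -> Dp p).
Hypothesis hp : prime p.
Hypothesis refl : forall d, (alpha d).1 = true.

Definition Xt d := tt p *: rho (Fpt p) (alpha d).
Definition Xit d := (tt p)^-1 *: rho (Fpt p) (Dinv (alpha d)).
Definition X2 d := tt p *: Tm (alpha d).
Definition Xi2 d := (tt p)^-1 *: Tm (Dinv (alpha d)).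

Lemma hX d : invmx (Pm p) *m Xt d *m Pm p = X2 d.
Proof. by rewrite /Xt /X2 -scalemxAr -scalemxAl conj_rho. Qed.
Lemma hXi d : invmx (Pm p) *m Xit d *m Pm p = Xi2 d.
Proof. by rewrite /Xit /Xi2 -scalemxAr -scalemxAl conj_rho. Qed.

Lemma sgA d : sg (alpha d) = -1. Proof. by rewrite /sg refl. Qed.
Lemma sgAi d : sg (Dinv (alpha d)) = -1. Proof. by rewrite /sg /= refl. Qed.

Lemma utX2 d : utri (X2 d). Proof. by apply: utri_scale; apply: Tm_utri. Qed.
Lemma utXi2 d : utri (Xi2 d). Proof. by apply: utri_scale; apply: Tm_utri. Qed.

Lemma num : \det (fox_minor Xt Xit (relator e) (dart0 n) (dart0 n))
         = \det (fox_minor X2 Xi2 (relator e) (dart0 n) (dart0 n)).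
Proof.
have Pu := Pm_unit hp.
have E := minor_conj Xt Xit (relator e) (dart0 n) (dart0 n) Pu.
rewrite (_ : fox_minor X2 Xi2 _ _ _ = fox_minor (fun d => invmx (Pm p) *m Xt d *m Pm p)
               (fun d => invmx (Pm p) *m Xit d *m Pm p) (relator e) (dart0 n) (dart0 n)).
  by rewrite E !det_mulmx mulrAC Qm_det // mul1r.
rewrite !fox_minorE; apply: eq_mxJ => x y; rewrite /mf.
have E2 : forall w g, fox X2 Xi2 w g = fox (fun d => invmx (Pm p) *m Xt d *m Pm p)
               (fun d => invmx (Pm p) *m Xit d *m Pm p) w g.
  by move=> w g; apply: eq_fox => d; rewrite ?hX ?hXi.
by rewrite E2.
Qed.

Lemma lay : \det (fox_minor X2 Xi2 (relator e) (dart0 n) (dart0 n))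
         = \prod_(a < (Zp_trunc p).+2) alex e (tt p * (-1) ^+ a).
Proof.
rewrite fox_minorE (det_mxJ_layers (q' := (Zp_trunc p).+1) (dart0 n)); last first.
  move=> r a g b ba; rewrite /mf.
  case: ifP => _; case: ifP => _.
  - by rewrite (_ : (a == b) = false) ?mulr0n // -val_eqE /= gtn_eqF.
  - by [].
  - by [].
  - by have [H _] := fox_utri (relator e r) g utX2 utXi2; apply: H.
apply: eq_bigr => a _; rewrite /alex fox_minorE; congr (\det _).
apply: eq_mxJ => -[r i] [g j]; rewrite /mf /=.
rewrite !ord1 eqxx.
case: ifP => _; case: ifP => _ //.
have [_ H] := fox_utri (relator e r) g utX2 utXi2; rewrite H.
rewrite (@eq_fox _ _ _ _ _ (fun _ => (tt p * (-1) ^+ a)%:M) (fun _ => ((tt p * (-1) ^+ a)^-1)%:M)).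
- by [].
- by move=> d; rewrite /X2 mxE Tm_diag sgA.
- move=> d; rewrite /Xi2 mxE Tm_diag sgAi invfM.
  by congr (_ * _)%:M; rewrite -[LHS]invr_sign.
Qed.

Lemma den : \det (1%:M - Xt (dart0 n)) = \prod_(a < (Zp_trunc p).+2) (1 - tt p * (-1) ^+ a).
Proof.
have Pu := Pm_unit hp.
have -> : \det (1%:M - Xt (dart0 n)) = \det (invmx (Pm p) *m (1%:M - Xt (dart0 n)) *m Pm p).
  have dP : \det (Pm p) != 0 by move: Pu; rewrite unitmxE unitfE.
  by rewrite !det_mulmx det_inv mulrAC mulVf // mul1r.
rewrite mulmxBr mulmxBl mulmx1 mulVmx // hX -det_tr det_trig.
  by apply: eq_bigr => a _; rewrite /X2 !mxE eqxx binn subnn expr0 mulr1 mul1r sgA.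
apply/is_trig_mxP => i j lt; rewrite /X2 !mxE bin_small // (_ : (j == i) = false).
  by rewrite mulr0n !mul0r mulr0 subr0.
by rewrite -val_eqE /= gtn_eqF.
Qed.
End Main.

Theorem proposition5 (p : nat) (hp : prime p) (hodd : odd p)
    (n : nat) (e : dart n -> dart n) (hK : knot_diagram e)
    (alpha : dart n -> Dp p) (hhom : is_hom e alpha) (hepi : is_epi alpha) :
  exists (s : bool) (k : int),
    twisted_alex e alpha =
      (-1) ^+ s * tt p ^ k
      * (alex e (tt p) / (1 - tt p)) ^+ (p./2).+1
      * (alex e (- tt p) / (1 + tt p)) ^+ p./2.
Proof.
have refl := all_refl hK hhom hepi.
exists false, 0.
rewrite (_ : twisted_alex e alpha = \det (fox_minor (Xt alpha) (Xit alpha) (relator e) (dart0 n) (dart0 n))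
            / \det (1%:M - Xt alpha (dart0 n))) //.
rewrite num // lay // den // expr0 expr0z !mul1r.
rewrite -prodfV -big_split /=.
have pE : (Zp_trunc p).+2 = ((p./2).*2).+1.
  by rewrite qE // -{1}(odd_double_half p) hodd add1n.
rewrite -(big_mkord xpredT (fun a => alex e (tt p * (-1) ^+ a) * (1 - tt p * (-1) ^+ a)^-1)).
rewrite pE big_mkord (prod_parity (h := fun a => alex e (tt p * (-1) ^+ a) * (1 - tt p * (-1) ^+ a)^-1)); last by move=> a; rewrite signr_odd.
by rewrite expr0 expr1 !mulr1 mulrN1 opprK.
Qed.
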